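(* Let $S$ be a monoid and let $\mathbb{C}$ be a class of $S$-acts closed under taking subacts and products. Let $r_{\mathbb{C}}$ be the Hoehnke radical defined by $r_{\mathbb{C}}(A)=\bigwedge\{\chi\in\mathrm{Con}(A): A/\chi\in\mathbb{C}\}$, and let $\mathbb{R}_{r_{\mathbb{C}}}=\{A: r_{\mathbb{C}}(A)=\nabla_A\}$. Then: (1) $\mathbb{R}_{r_{\mathbb{C}}}$ is closed under homomorphic images; (2) $\mathbb{R}_{r_{\mathbb{C}}}$ has the inductive property; (3) $\mathbb{R}_{r_{\mathbb{C}}}$ is closed under Rees extensions.
   Context: An $S$-act over a monoid $S$ is a set $A$ with an action $(s,a)\mapsto sa$ satisfying $s(ta)=(st)a$ and $1a=a$; homomorphisms are action-preserving maps. An $S$-act is trivial if $|A|\le1$. Classes of $S$-acts are assumed closed under isomorphic copies and to contain all trivial $S$-acts. $\mathrm{Con}(A)$ is the lattice of congruences (action-compatible equivalence relations) on $A$, with $\nabla_A=A\times A$. A Rees congruence is a congruence each of whose classes is a subact or a singleton; $\Sigma_\rho$ denotes the set of classes of $\rho$ that are non-trivial subacts. A (normal) Hoehnke radical is an assignment $r$ of a congruence $r(A)$ to each $S$-act $A$ such that homomorphisms $f:A\to B$ map $r(A)$-related pairs to $r(B)$-related pairs and $r(A/r(A))$ is the diagonal. A class $\mathbb{C}'$ has the inductive property if for every ascending chain $(A_i)_{i\in I}$ of subacts (of some $S$-act) with all $A_i\in\mathbb{C}'$, the union $\bigcup_i A_i\in\mathbb{C}'$. $\mathbb{C}'$ is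 closed under Rees extensions if whenever $A$ has a Rees congruence $\chi$ with $\Sigma_\chi\subseteq\mathbb{C}'$ and $A/\chi\in\mathbb{C}'$, then $A\in\mathbb{C}'$. *)

(* Defs.v *)
From Stdlib Require Import FunctionalExtensionality PropExtensionality
  ProofIrrelevance IndefiniteDescription.

Set Implicit Arguments.
Unset Strict Implicit.

Record monoid := Monoid {
  mcar :> Type;
  mop : mcar -> mcar -> mcar;
  mone : mcar;
  mopA : forall x y z, mop x (mop y z) = mop (mop x y) z;
  mop1l : forall x, mop mone x = x;
  mop1r : forall x, mop x mone = x }.

Record act (S : monoid) := Act {
  acar :> Type;
  actf : S -> acar -> acar;
  actA : forall s t a, actf s (actf t a) = actf (@mop S s t) a;
  act1 : forall a, actf (@mone S) a = a }.

Arguments actf {S} _ _ _.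

Section Acts.
Variable S : monoid.

Definition is_hom (A B : act S) (f : A -> B) : Prop :=
  forall s a, f (actf A s a) = actf B s (f a).

Definition surjective (X Y : Type) (f : X -> Y) : Prop := forall y, exists x, f x = y.
Definition injective (X Y : Type) (f : X -> Y) : Prop := forall x y, f x = f y -> x = y.

Definition trivial_act (A : act S) : Prop := forall a b : A, a = b.

Definition is_congruence (A : act S) (R : A -> A -> Prop) : Prop :=
  (forall a, R a a) /\ (forall a b, R a b -> R b a) /\
  (forall a b c, R a b -> R b c -> R a c) /\
  (forall s a b, R a b -> R (actf A s a) (actf A s b)).

Definition subact_closed (A : act S) (P : A -> Prop) : Prop :=
  forall s a, P a -> P (actf A s a).

Section Subact.
Variables (A : act S) (P : A -> Prop) (HP : subact_closed P).
Definition sub_actf (s : S) (x : {a : A | P a}) : {a : A | P a} :=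
  exist _ (actf A s (proj1_sig x)) (HP s (proj2_sig x)).
Lemma sub_actA s t x : sub_actf s (sub_actf t x) = sub_actf (@mop S s t) x.
Proof. destruct x as [a Pa]; unfold sub_actf; simpl.
  apply subset_eq_compat. apply actA. Qed.
Lemma sub_act1 x : sub_actf (@mone S) x = x.
Proof. destruct x as [a Pa]; unfold sub_actf; simpl.
  apply subset_eq_compat. apply act1. Qed.
Definition subact_act : act S := Act sub_actA sub_act1.
End Subact.

Section Product.
Variables (I : Type) (F : I -> act S).
Definition prod_actf (s : S) (x : forall i, F i) : forall i, F i :=
  fun i => actf (F i) s (x i).
Lemma prod_actA s t x : prod_actf s (prod_actf t x) = prod_actf (@mop S s t) x.
Proof. apply functional_extensionality_dep; intro i; apply actA. Qed.
Lemma prod_act1 x : prod_actf (@mone S) x = x.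
Proof. apply functional_extensionality_dep; intro i; apply act1. Qed.
Definition prod_act : act S := Act prod_actA prod_act1.
End Product.

Section Quotient.
Variables (A : act S) (R : A -> A -> Prop) (HR : is_congruence R).
Definition quot_car := {X : A -> Prop | exists a, X = R a}.
Definition qclass (a : A) : quot_car := exist _ (R a) (ex_intro _ a eq_refl).
Definition qrep (X : quot_car) : A := proj1_sig (constructive_indefinite_description _ (proj2_sig X)).
Lemma qrepK X : qclass (qrep X) = X.
Proof. unfold qrep, qclass. destruct (constructive_indefinite_description _ _) as [a Ha].
  simpl. destruct X as [X HX]. simpl in *. subst. apply subset_eq_compat. reflexivity. Qed.
Lemma qclass_eq a b : R a b -> qclass a = qclass b.
Proof. destruct HR as [Hr [Hs [Ht _]]]. intro Hab. unfold qclass. apply subset_eq_compat.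
  apply functional_extensionality; intro c; apply propositional_extensionality; split; eauto. Qed.
Lemma qclass_rel a b : qclass a = qclass b -> R a b.
Proof. destruct HR as [Hr _]. intro E. assert (E' : R a = R b) by exact (f_equal (@proj1_sig _ _) E).
  rewrite E'. apply Hr. Qed.
Definition quot_actf (s : S) (X : quot_car) : quot_car := qclass (actf A s (qrep X)).
Lemma quot_actA s t X : quot_actf s (quot_actf t X) = quot_actf (@mop S s t) X.
Proof. unfold quot_actf. apply qclass_eq. rewrite <- actA. destruct HR as [_ [Hs [_ Hc]]].
  apply Hc. apply qclass_rel. rewrite qrepK. reflexivity. Qed.
Lemma quot_act1 X : quot_actf (@mone S) X = X.
Proof. unfold quot_actf. rewrite act1. apply qrepK. Qed.
Definition quot_act : act S := Act quot_actA quot_act1.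
End Quotient.

Definition act_class := act S -> Prop.

Definition iso_closed (C : act_class) : Prop :=
  forall (A B : act S) (f : A -> B), is_hom f -> injective f -> surjective f -> C A -> C B.
Definition contains_trivial (C : act_class) : Prop :=
  forall A : act S, trivial_act A -> C A.
Definition subacts_closed (C : act_class) : Prop :=
  forall (A : act S) (P : A -> Prop) (HP : subact_closed P), C A -> C (subact_act HP).
Definition products_closed (C : act_class) : Prop :=
  forall (I : Type) (F : I -> act S), (forall i, C (F i)) -> C (prod_act F).

Definition rad (C : act_class) (A : act S) (a b : A) : Prop :=
  forall (chi : A -> A -> Prop) (Hchi : is_congruence chi), C (quot_act Hchi) -> chi a b.

Definition radical_class (C : act_class) : act_class :=
  fun A => forall a b : A, rad C a b.

Definition hom_images_closed (D : act_class) : Prop :=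
  forall (A B : act S) (f : A -> B), is_hom f -> surjective f -> D A -> D B.

Lemma union_subact_closed (X : act S) (I : Type) (P : I -> X -> Prop) :
  (forall i, subact_closed (P i)) -> subact_closed (fun x => exists i, P i x).
Proof. intros H s a [i Hi]. exists i. apply H, Hi. Qed.

Definition inductive_prop (D : act_class) : Prop :=
  forall (X : act S) (I : Type) (P : I -> X -> Prop) (HP : forall i, subact_closed (P i)),
    (forall i j, (forall x, P i x -> P j x) \/ (forall x, P j x -> P i x)) ->
    (forall i, D (subact_act (HP i))) ->
    D (subact_act (union_subact_closed HP)).

Definition rees_congruence (A : act S) (chi : A -> A -> Prop) : Prop :=
  is_congruence chi /\
  forall a, subact_closed (chi a) \/ (forall b, chi a b -> b = a).

(** (3) closed under Rees extensions; the classes in Sigma_chi are the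
    classes chi a that are subacts with at least two elements *)
Definition rees_ext_closed (D : act_class) : Prop :=
  forall (A : act S) (chi : A -> A -> Prop) (Hchi : is_congruence chi),
    (forall a, subact_closed (chi a) \/ (forall b, chi a b -> b = a)) ->
    (forall a (Ha : subact_closed (chi a)),
        (exists b c, chi a b /\ chi a c /\ b <> c) -> D (subact_act Ha)) ->
    D (quot_act Hchi) -> D A.

End Acts.

(* Main.v *)
Require Import Defs.
From Stdlib Require Import FunctionalExtensionality PropExtensionality
  ProofIrrelevance IndefiniteDescription Classical.

Section Aux.
Variable S : monoid.

Lemma qrep_qclass (A : act S) (R : A -> A -> Prop) (HR : is_congruence R) a :
  R a (qrep (qclass R a)).
Proof. apply (qclass_rel HR). symmetry. apply qrepK. Qed.
Arguments qrep_qclass {A R} HR a.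

Lemma iso_lemma (C : act_class S) (HC : iso_closed C) (Q A : act S)
  (chi : A -> A -> Prop) (Hchi : is_congruence chi) (g : Q -> A) :
  (forall q q', chi (g q) (g q') -> q = q') ->
  (forall a, exists q, chi a (g q)) ->
  (forall s q, chi (g (actf Q s q)) (actf A s (g q))) ->
  C Q -> C (quot_act Hchi).
Proof.
  intros Hinj Hsur Hcomp CQ.
  pose proof Hchi as [Hr [Hs [Ht Hc]]].
  apply (HC Q (quot_act Hchi) (fun q => qclass chi (g q))); [ | | | exact CQ].
  - intros s q. simpl. unfold quot_actf. apply (qclass_eq Hchi).
    eapply Ht. apply Hcomp. apply Hc. apply qrep_qclass; auto.
  - intros q q' H. apply Hinj. exact (qclass_rel Hchi H).
  - intros Y. destruct (Hsur (qrep Y)) as [q Hq]. exists q.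
    rewrite <- (qrepK Y). apply (qclass_eq Hchi). apply Hs. exact Hq.
Qed.

Arguments iso_lemma {C} HC {Q A chi} Hchi {g}.

Lemma pull_cong (A B : act S) (e : B -> A) (He : is_hom e)
  (theta : A -> A -> Prop) (Ht : is_congruence theta) :
  is_congruence (fun x y => theta (e x) (e y)).
Proof.
  pose proof Ht as [Hr [Hs [Htr Hc]]]. split; [|split; [|split]]; eauto.
  intros s a b H. rewrite !He. auto.
Qed.

Arguments pull_cong {A B e} He {theta} Ht.

Lemma restr_lemma (C : act_class S) (HC : iso_closed C) (HS : subacts_closed C)
  (A B : act S) (e : B -> A) (He : is_hom e)
  (theta : A -> A -> Prop) (Ht : is_congruence theta) :
  C (quot_act Ht) -> C (quot_act (pull_cong He Ht)).
Proof.
  intro CA.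
  set (P := fun Y : quot_act Ht => exists b, Y = qclass theta (e b)).
  assert (HP : subact_closed P).
  { intros s Y [b Hb]. exists (actf B s b). subst Y. simpl. unfold quot_actf.
    rewrite He. apply (qclass_eq Ht). pose proof Ht as [Hr [Hs [Htr Hc]]].
    apply Hc. apply Hs. apply qrep_qclass; auto. }
  pose proof (HS _ P HP CA) as CQ.
  set (g := fun q : subact_act HP => proj1_sig (constructive_indefinite_description _ (proj2_sig q))).
  assert (Hg : forall q : subact_act HP, proj1_sig q = qclass theta (e (g q))).
  { intro q. unfold g. destruct (constructive_indefinite_description _ _) as [b Hb]. exact Hb. }
  pose proof Ht as [Hr [Hs [Htr Hc]]].
  apply (iso_lemma HC (pull_cong He Ht) (g := g)); [ | | | exact CQ].
  - intros q q' H. destruct q as [Y hY], q' as [Y' hY'].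
    pose proof (Hg (exist _ Y hY)) as H1. pose proof (Hg (exist _ Y' hY')) as H2.
    simpl in H1, H2. apply subset_eq_compat. rewrite H1, H2.
    apply (qclass_eq Ht). exact H.
  - intro b. exists (exist P (qclass theta (e b)) (ex_intro _ b eq_refl)).
    apply (qclass_rel Ht). rewrite <- Hg. reflexivity.
  - intros s q. simpl. apply (qclass_rel Ht).
    rewrite <- Hg. pose proof (Hg q) as Hq. simpl. unfold quot_actf.
    eapply eq_trans.
    { apply (f_equal (fun X => qclass theta (actf A s (qrep X)))). exact Hq. }
    apply (qclass_eq Ht). rewrite He. apply Hc. apply Hs. apply qrep_qclass; auto.
Qed.

Arguments restr_lemma {C} HC HS {A B e} He {theta Ht}.
End Aux.
Arguments qrep_qclass {S A R} HR a.
Arguments iso_lemma {S C} HC {Q A chi} Hchi {g}.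
Arguments pull_cong {S A B e} He {theta} Ht.
Arguments restr_lemma {S C} HC HS {A B e} He {theta Ht}.

Theorem lemma2p4 (S : monoid) (C : act_class S) :
  iso_closed C -> contains_trivial C -> subacts_closed C -> products_closed C ->
  hom_images_closed (radical_class C) /\
  inductive_prop (radical_class C) /\
  rees_ext_closed (radical_class C).
Proof.
  intros HC HT HS HPr. split; [|split].
  - intros A B f Hf Hsur DA b b' theta Ht CB.
    pose proof (restr_lemma HC HS Hf CB) as CA.
    destruct (Hsur b) as [a <-]. destruct (Hsur b') as [a' <-].
    exact (DA a a' _ _ CA).
  - intros X I P HP Hch DP x y chi Hchi CU.
    destruct x as [x0 [i hi]] eqn:Ex, y as [y0 [j hj]] eqn:Ey.
    assert (Hk : exists k, P k x0 /\ P k y0).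
    { destruct (Hch i j) as [H|H]; [exists j | exists i]; auto. }
    destruct Hk as [k [hx hy]].
    set (U := subact_act (union_subact_closed HP)).
    set (e := fun p : subact_act (HP k) =>
          (exist _ (proj1_sig p) (ex_intro _ k (proj2_sig p)) : U)).
    assert (He : is_hom e).
    { intros s p. unfold e. apply subset_eq_compat. reflexivity. }
    pose proof (restr_lemma HC HS He CU) as Ck.
    pose proof (DP k (exist _ x0 hx) (exist _ y0 hy) _ _ Ck) as H. simpl in H.
    unfold e in H. simpl in H.
    replace (exist _ x0 (ex_intro _ i hi) : U) with (exist _ x0 (ex_intro (fun i => P i x0) k hx) : U)
      by (apply subset_eq_compat; reflexivity).
    replace (exist _ y0 (ex_intro _ j hj) : U) with (exist _ y0 (ex_intro (fun i => P i y0) k hy) : U)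
      by (apply subset_eq_compat; reflexivity).
    exact H.
  - intros A chi Hchi Hrees Hsig DQ a b theta Ht CA.
    assert (Hsub : forall x y, chi x y -> theta x y).
    { intros x y Hxy. pose proof Ht as [Hr [Hs [Htr Hc]]].
      pose proof Hchi as [Cr [Cs [Ctr Cc]]].
      destruct (Hrees x) as [Hx | Hx].
      - destruct (classic (exists b c, chi x b /\ chi x c /\ b <> c)) as [Hn | Hn].
        + pose proof (Hsig x Hx Hn) as D.
          assert (He : is_hom (fun p : subact_act Hx => proj1_sig p))
            by (intros s p; reflexivity).
          pose proof (restr_lemma HC HS He CA) as Ck.
          exact (D (exist _ x (Cr x)) (exist _ y Hxy) _ _ Ck).
        + destruct (classic (x = y)) as [<-|Hne]; auto.
          exfalso. apply Hn. exists x, y. auto.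
      - rewrite (Hx y Hxy). auto. }
    set (th' := fun X Y : quot_act Hchi => theta (qrep X) (qrep Y)).
    assert (Hth' : is_congruence th').
    { unfold th'. pose proof Ht as [Hr [Hs [Htr Hc]]].
      split; [|split; [|split]]; eauto.
      intros s X Y H. simpl. unfold quot_actf.
      apply Htr with (actf A s (qrep X)).
      { apply Hs. apply Hsub. apply qrep_qclass; auto. }
      apply Htr with (actf A s (qrep Y)); auto.
      apply Hsub. apply qrep_qclass; auto. }
    assert (CQ : C (quot_act Hth')).
    { pose proof Ht as [Hr [Hs [Htr Hc]]].
      apply (iso_lemma HC Hth' (g := fun Y : quot_act Ht => qclass chi (qrep Y))); [ | | | exact CA].
      - intros Y Y' H. unfold th' in H. rewrite <- (qrepK Y), <- (qrepK Y').
        apply (qclass_eq Ht).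
        apply Htr with (qrep (qclass chi (qrep Y))).
        { apply Hsub. apply qrep_qclass; auto. }
        apply Htr with (qrep (qclass chi (qrep Y'))); auto.
        apply Hs. apply Hsub. apply qrep_qclass; auto.
      - intro X. exists (qclass theta (qrep X)). unfold th'.
        apply Htr with (qrep (qclass theta (qrep X))).
        { apply qrep_qclass; auto. }
        apply Hsub. apply qrep_qclass; auto.
      - intros s Y. unfold th'. simpl. unfold quot_actf.
        apply Htr with (qrep (qclass theta (actf A s (qrep Y)))).
        { apply Hs. apply Hsub. apply qrep_qclass; auto. }
        apply Htr with (actf A s (qrep Y)).
        { apply Hs. apply qrep_qclass; auto. }
        apply Htr with (actf A s (qrep (qclass chi (qrep Y)))).
        { apply Hc. apply Hsub. apply qrep_qclass; auto. }
        apply Hsub. apply qrep_qclass; auto. }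
    pose proof (DQ (qclass chi a) (qclass chi b) _ _ CQ) as H. unfold th' in H.
    pose proof Ht as [Hr [Hs [Htr Hc]]].
    apply Htr with (qrep (qclass chi a)).
    { apply Hsub. apply qrep_qclass; auto. }
    apply Htr with (qrep (qclass chi b)); auto.
    apply Hs. apply Hsub. apply qrep_qclass; auto.
Qed.
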